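(* Let $\mathcal M=(S,A,P,R)$ be an MDP with rewards, $\mathrm{Bad}\subset S$ a set of sink states, $s_0\in S$ with $\mathrm{Val}(s_0)>0$, and $\mathcal M'$ the pruned MDP. Let $\sigma^*$ be a strategy of $\mathcal M'$ maximizing $\mathbb E'_{\sigma,s_0}(\mathsf{MP})$ over all strategies $\sigma$ of $\mathcal M'$. Then (1) $\Pr_{\sigma^*,s_0}(\Box\neg\mathrm{Bad})=\mathrm{Val}(s_0)$, and (2) $\mathbb E_{\sigma^*,s_0}(\mathsf{MP}\mid\Box\neg\mathrm{Bad})=\max_{\sigma\in\Sigma_{\mathcal M,s_0}(\Box\neg\mathrm{Bad})}\mathbb E_{\sigma,s_0}(\mathsf{MP}\mid\Box\neg\mathrm{Bad})$.
   Context: An MDP with rewards is $\mathcal M=(S,A,P,R)$ with $S,A$ finite, $P$ a partial map $S\times A\to\mathrm{Dist}(S)$ and $R:S\times A\to\mathbb R$; $a$ is legal at $s$ if $P(s,a)$ is defined; $P(s,a,s')=P(s,a)(s')$. A strategy maps finite paths to distributions over legal actions at the last state (history-dependent, randomized); $\Pr_{\sigma,s}$, $\mathbb E_{\sigma,s}$ are the induced probability measure and expectation on infinite paths from $s$. States in $\mathrm{Bad}$ are sinks (single legal action, self-loop with probability 1); $\Box\neg\mathrm{Bad}$ is the event of never visiting $\mathrm{Bad}$; $\mathrm{Val}(s)=\max_\sigma\Pr_{\sigma,s}(\Box\neg\mathrm{Bad})$; $\Sigma_{\mathcal M,s}(\Box\neg\mathrm{Bad})$ is the set of strategies attaining $\mathrm{Val}(s)$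 from $s$. For a path $s_0a_0s_1a_1\dots$, $\mathrm{Reward}_n=\sum_{i=0}^{n-1}R(s_i,a_i)$. $\mathbb E_{\sigma,s}(\mathsf{MP}\mid\Box\neg\mathrm{Bad})=\liminf_{n\to\infty}\frac1n\mathbb E_{\sigma,s}(\mathrm{Reward}_n\cdot\mathbf 1_{\Box\neg\mathrm{Bad}})/\Pr_{\sigma,s}(\Box\neg\mathrm{Bad})$, and in any MDP $\mathbb E_{\sigma,s}(\mathsf{MP})=\liminf_{n\to\infty}\frac1n\mathbb E_{\sigma,s}(\mathrm{Reward}_n)$. $\mathrm{Opt}_{\mathcal M}=\{(s,a): a\text{ legal at }s,\ \mathrm{Val}(s)=\sum_{s'}P(s,a,s')\mathrm{Val}(s')\}$. The pruned MDP $\mathcal M'=(S',A,P',R')$ has $S'=\{s:\mathrm{Val}(s)>0\}$, $R'=R$ restricted to $S'$, and $P'(s,a,s')=P(s,a,s')\mathrm{Val}(s')/\mathrm{Val}(s)$ if $s\in S'$ and $(s,a)\in\mathrm{Opt}_{\mathcal M}$ (undefined otherwise). Strategies of $\mathcal M'$ are identified with strategies of $\mathcal M$ that after every finite path $\rho$ only play actions $a$ with $(\mathrm{last}(\rho),a)\in\mathrm{Opt}_{\mathcal M}$; $\mathbb E'_{\sigma,s}$ is the expectation in $\mathcal M'$ (with rewards $R'$). *)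

(* Defs.v *)
From HB Require Import structures.
From mathcomp Require Import all_boot all_order all_algebra.
From mathcomp Require Import all_classical all_reals.
From mathcomp Require Import topology normedtype sequences.
Set Implicit Arguments.
Unset Strict Implicit.
Unset Printing Implicit Defensive.
Import Order.TTheory GRing.Theory Num.Theory.
Import numFieldNormedType.Exports.
Local Open Scope ring_scope.
Local Open Scope classical_set_scope.

(* P is a partial map S x A -> Dist(S): [None] = undefined (illegal action). *)
Record mdp (R : realType) (S A : finType) := MDP {
  trans : S -> A -> option {ffun S -> R};
  trans_dist : forall s a mu, trans s a = Some mu ->
      (forall s', 0 <= mu s') /\ \sum_(s' : S) mu s' = 1;
  rew : S -> A -> R
}.

Section Defs.
Variables (R : realType) (S A : finType).

Definition legal (M : mdp R S A) (s : S) (a : A) : bool :=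
  if trans M s a is Some _ then true else false.

Definition tp (M : mdp R S A) (s : S) (a : A) (s' : S) : R :=
  if trans M s a is Some mu then mu s' else 0.

(* A finite path s0 a0 s1 ... a_{n-1} s_n is represented by its first state
   s0 and the list [(a0,s1); ...; (a_{n-1},s_n)]. *)
Definition last_state (s0 : S) (h : seq (A * S)) : S := last s0 (unzip2 h).

Fixpoint valid_path (M : mdp R S A) (s : S) (h : seq (A * S)) : bool :=
  if h is (a, s') :: h' then [&& legal M s a, 0 < tp M s a s' & valid_path M s' h']
  else true.

(* A (history-dependent, randomized) strategy: first state -> history ->
   action -> probability. *)
Definition strategy := S -> seq (A * S) -> A -> R.

Definition is_strategy (M : mdp R S A) (sigma : strategy) : Prop :=
  forall s0 h, valid_path M s0 h ->
    (forall a, 0 <= sigma s0 h a) /\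
    (\sum_(a : A) sigma s0 h a = 1) /\
    (forall a, 0 < sigma s0 h a -> legal M (last_state s0 h) a).

(* Probability, under sigma started in s0, of the cylinder of the finite path
   continuing history [pre] (current state [cur]) with the steps [l],
   for a transition function [P : S -> A -> S -> R]. *)
Fixpoint cylprob (P : S -> A -> S -> R) (sigma : strategy) (s0 : S)
    (pre : seq (A * S)) (cur : S) (l : seq (A * S)) : R :=
  if l is (a, s') :: l' then
    sigma s0 pre a * P cur a s' * cylprob P sigma s0 (rcons pre (a, s')) s' l'
  else 1.

Definition pathprob P sigma s0 (l : seq (A * S)) := cylprob P sigma s0 [::] s0 l.

Fixpoint reward_along (r : S -> A -> R) (s : S) (l : seq (A * S)) : R :=
  if l is (a, s') :: l' then r s a + reward_along r s' l' else 0.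

Definition avoids (Bad : {set S}) (s0 : S) (l : seq (A * S)) : bool :=
  (s0 \notin Bad) && all (fun p => p.2 \notin Bad) l.

Definition prob_safe_n (M : mdp R S A) Bad sigma s (n : nat) : R :=
  \sum_(t : n.-tuple (A * S)) pathprob (tp M) sigma s t * (avoids Bad s t)%:R.

(* Pr_{sigma,s}(Box not Bad) = lim_n Pr(no Bad within n steps)
   (continuity of the path measure from above on cylinder events) *)
Definition prob_safe (M : mdp R S A) Bad sigma s : R :=
  limn (prob_safe_n M Bad sigma s).

(* E_{sigma,s}(Reward_n * 1_{Box not Bad}) = lim_m E(Reward_n * 1_{no Bad within n+m steps}) *)
Definition exp_reward_safe (M : mdp R S A) Bad sigma s (n : nat) : R :=
  limn (fun m => \sum_(t : (n + m).-tuple (A * S))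
          pathprob (tp M) sigma s t * reward_along (rew M) s (take n t)
            * (avoids Bad s t)%:R).

Definition cond_MP (M : mdp R S A) Bad sigma s : R :=
  limn_inf (fun n => n%:R^-1 * exp_reward_safe M Bad sigma s n
                       / prob_safe M Bad sigma s).

Definition exp_reward (P : S -> A -> S -> R) (r : S -> A -> R) sigma s (n : nat) : R :=
  \sum_(t : n.-tuple (A * S)) pathprob P sigma s t * reward_along r s t.

Definition exp_MP (P : S -> A -> S -> R) (r : S -> A -> R) sigma s : R :=
  limn_inf (fun n => n%:R^-1 * exp_reward P r sigma s n).

Definition Val (M : mdp R S A) Bad (s : S) : R :=
  sup [set prob_safe M Bad sigma s | sigma in is_strategy M].

Definition opt_safe_strategies (M : mdp R S A) Bad (s : S) : set strategy :=
  [set sigma | is_strategy M sigma /\ prob_safe M Bad sigma s = Val M Bad s].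

Definition Opt (M : mdp R S A) Bad (s : S) (a : A) : Prop :=
  legal M s a /\ Val M Bad s = \sum_(s' : S) tp M s a s' * Val M Bad s'.

(* Transition probabilities P' of the pruned MDP M' (undefined, i.e. 0,
   outside S' x Opt).  States outside S' = {s | Val s > 0} are unreachable
   in M' from states of S' since P'(s,a,s') = 0 when Val s' = 0. *)
Definition pruned_tp (M : mdp R S A) Bad (s : S) (a : A) (s' : S) : R :=
  if `[< 0 < Val M Bad s /\ Opt M Bad s a >] then
    tp M s a s' * Val M Bad s' / Val M Bad s
  else 0.

(* strategies of M' = strategies of M playing only Opt actions after every
   finite path *)
Definition is_pruned_strategy (M : mdp R S A) Bad (sigma : strategy) : Prop :=
  is_strategy M sigma /\
  forall s0 h, valid_path M s0 h ->
    forall a, 0 < sigma s0 h a -> Opt M Bad (last_state s0 h) a.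

(* E'_{sigma,s}(MP): mean payoff in M' (rewards R' = R on S') *)
Definition pruned_exp_MP (M : mdp R S A) Bad sigma s : R :=
  exp_MP (pruned_tp M Bad) (rew M) sigma s.

Definition sinks (M : mdp R S A) (Bad : {set S}) : Prop :=
  forall s, s \in Bad -> exists a,
    (forall b, legal M s b = (b == a)) /\ tp M s a s = 1.

End Defs.

(* Main.v *)
Require Import Defs.
From HB Require Import structures.
From mathcomp Require Import all_boot all_order all_algebra.
From mathcomp Require Import all_classical all_reals.
From mathcomp Require Import topology normedtype sequences.
Import Order.TTheory GRing.Theory Num.Theory.
Import numFieldNormedType.Exports.
Local Open Scope ring_scope.
Local Open Scope classical_set_scope.
Set Implicit Arguments.
Unset Strict Implicit.
Unset Printing Implicit Defensive.

Section Tup.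
Variables (R : realType) (T : finType).

Definition ttake n m (t : (n + m).-tuple T) : n.-tuple T.
Proof. exists (take n t). by rewrite size_takel // size_tuple leq_addr. Defined.
Definition tdrop n m (t : (n + m).-tuple T) : m.-tuple T.
Proof. exists (drop n t). by rewrite size_drop size_tuple addKn. Defined.

Lemma sum_tuple_cat n m (F : seq T -> R) :
  \sum_(t : (n + m).-tuple T) F t =
  \sum_(t1 : n.-tuple T) \sum_(t2 : m.-tuple T) F (t1 ++ t2).
Proof.
rewrite pair_big /=.
rewrite (reindex (fun p : n.-tuple T * m.-tuple T => [tuple of p.1 ++ p.2])) //=.
exists (fun t => (ttake t, tdrop t)).
  move=> [t1 t2] _ /=; congr pair; apply: val_inj => /=.
    by rewrite take_size_cat // size_tuple.
  by rewrite drop_size_cat // size_tuple.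
by move=> t _; apply: val_inj => /=; rewrite cat_take_drop.
Qed.

Lemma sum_tuple_eq n1 n2 (e : n1 = n2) (F : seq T -> R) :
  \sum_(t : n1.-tuple T) F t = \sum_(t : n2.-tuple T) F t.
Proof. by case: n2 / e. Qed.

Lemma sum_tuple1 (F : seq T -> R) :
  \sum_(t : 1.-tuple T) F t = \sum_(x : T) F [:: x].
Proof.
rewrite (reindex (fun x : T => [tuple x])) //=.
exists (fun t : 1.-tuple T => thead t) => // t _.
by case/tupleP: t => x t; rewrite tuple0; apply: val_inj.
Qed.

Lemma sum_tuple_rcons n (F : seq T -> R) :
  \sum_(t : n.+1.-tuple T) F t =
  \sum_(t : n.-tuple T) \sum_(x : T) F (rcons t x).
Proof.
rewrite -(sum_tuple_eq (addn1 n)) sum_tuple_cat.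
by apply: eq_bigr => t _; rewrite (sum_tuple1 (fun s => F (t ++ s))); apply: eq_bigr => x _; rewrite cats1.
Qed.

Lemma sum_tuple_cons n (F : seq T -> R) :
  \sum_(t : n.+1.-tuple T) F t =
  \sum_(x : T) \sum_(t : n.-tuple T) F (x :: t).
Proof.
rewrite -(sum_tuple_eq (add1n n)) sum_tuple_cat.
rewrite (sum_tuple1 (fun s => \sum_(t2 : n.-tuple T) F (s ++ t2))).
by apply: eq_bigr => x _.
Qed.
End Tup.
Section Paths.
Variables (R : realType) (S A : finType) (M : mdp R S A) (Bad : {set S}).
Implicit Types (sigma tau : strategy R S A) (t h pre l : seq (A * S)).
Local Notation tpM := (tp M).
Local Notation pp sigma s0 t := (pathprob tpM sigma s0 t).

Lemma cyl_cat (P : S -> A -> S -> R) sigma s0 pre cur l1 l2 :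
  cylprob P sigma s0 pre cur (l1 ++ l2) =
  cylprob P sigma s0 pre cur l1 *
  cylprob P sigma s0 (pre ++ l1) (last cur (unzip2 l1)) l2.
Proof.
elim: l1 pre cur => [|[a s'] l1 IH] pre cur /=; first by rewrite mul1r cats0.
by rewrite IH cat_rcons !mulrA.
Qed.

Lemma last_state_rcons s0 t x : last_state s0 (rcons t x) = x.2.
Proof. by rewrite /last_state /unzip2 map_rcons last_rcons. Qed.

Lemma last_state_cat s0 t1 t2 :
  last_state s0 (t1 ++ t2) = last_state (last_state s0 t1) t2.
Proof. by rewrite /last_state /unzip2 map_cat last_cat. Qed.

Lemma pathprob_rcons (P : S -> A -> S -> R) sigma s0 t a s' :
  pathprob P sigma s0 (rcons t (a, s')) =
  pathprob P sigma s0 t * (sigma s0 t a * P (last_state s0 t) a s').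
Proof. by rewrite /pathprob -cats1 cyl_cat /= mulr1. Qed.

Lemma pathprob_cat (P : S -> A -> S -> R) sigma s0 t1 t2 :
  pathprob P sigma s0 (t1 ++ t2) =
  pathprob P sigma s0 t1 * cylprob P sigma s0 t1 (last_state s0 t1) t2.
Proof. by rewrite /pathprob cyl_cat. Qed.

Lemma cyl_shift (P : S -> A -> S -> R) sigma tau s0 s1 pre0 pre cur l :
  (forall h, sigma s0 (pre0 ++ h) = tau s1 h) ->
  cylprob P sigma s0 (pre0 ++ pre) cur l = cylprob P tau s1 pre cur l.
Proof.
move=> H; elim: l pre cur => [|[a s'] l IH] pre cur //=.
by rewrite H rcons_cat IH.
Qed.

Lemma valid_cat s t1 t2 :
  valid_path M s (t1 ++ t2) =
  valid_path M s t1 && valid_path M (last_state s t1) t2.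
Proof.
elim: t1 s => [|[a s'] t1 IH] s //=.
by rewrite IH !andbA.
Qed.

Lemma valid_rcons s t a s' :
  valid_path M s (rcons t (a, s')) =
  [&& valid_path M s t, legal M (last_state s t) a &
      0 < tp M (last_state s t) a s'].
Proof. by rewrite -cats1 valid_cat /= andbT. Qed.

Lemma avoids_cons s x t : avoids Bad s (x :: t) = (s \notin Bad) && avoids Bad x.2 t.
Proof. by []. Qed.

Lemma avoids_last s t : avoids Bad s t -> last_state s t \notin Bad.
Proof.
elim: t s => [|[a s'] t IH] s; first by rewrite /avoids andbT.
by rewrite avoids_cons => /andP[_ /IH].
Qed.

Lemma avoids_cat s t1 t2 :
  avoids Bad s (t1 ++ t2) = avoids Bad s t1 && avoids Bad (last_state s t1) t2.
Proof.
elim: t1 s => [|x t1 IH] s /=.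
  by rewrite /avoids /= andbT; case: (s \notin Bad).
by rewrite avoids_cons IH avoids_cons andbA.
Qed.

Lemma tp_ge0 s a s' : 0 <= tpM s a s'.
Proof.
rewrite /tp; case E: (trans M s a) => [mu|] //.
by have [H _] := trans_dist E.
Qed.

Lemma tp_sum s a : \sum_s' tpM s a s' = (legal M s a)%:R.
Proof.
rewrite /tp /legal; case E: (trans M s a) => [mu|] /=.
  by have [_ H] := trans_dist E.
by rewrite big1.
Qed.

Lemma tp_legal s a s' : 0 < tpM s a s' -> legal M s a.
Proof. by rewrite /tp /legal; case: (trans M s a) => //; rewrite ltxx. Qed.

Lemma pp_ge0_valid sigma s0 t : is_strategy M sigma ->
  0 <= pp sigma s0 t /\ (pp sigma s0 t != 0 -> valid_path M s0 t).
Proof.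
move=> Hs; elim/last_ind: t => [|t [a s'] [IH1 IH2]].
  by rewrite /pathprob /= ler01.
rewrite pathprob_rcons valid_rcons.
have [->|nz] := eqVneq (pp sigma s0 t) 0; first by rewrite mul0r eqxx.
have vt := IH2 nz.
have [g0 [_ gl]] := Hs s0 t vt.
split; first by rewrite !mulr_ge0 // tp_ge0.
rewrite !mulf_eq0 negb_or => /andP[_]; rewrite negb_or => /andP[h1 h2].
have p1 : 0 < sigma s0 t a by rewrite lt_def h1 g0.
have p2 : 0 < tpM (last_state s0 t) a s' by rewrite lt_def h2 tp_ge0.
by rewrite vt gl.
Qed.

Lemma strat_mass sigma s0 t : is_strategy M sigma -> valid_path M s0 t ->
  forall f : A -> R, (forall a, legal M (last_state s0 t) a -> f a = 1) ->
  \sum_a sigma s0 t a * f a = 1.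
Proof.
move=> Hs vt f Hf; have [g0 [g1 gl]] := Hs s0 t vt.
rewrite -g1; apply: eq_bigr => a _.
have [->|nz] := eqVneq (sigma s0 t a) 0; first by rewrite mul0r.
by rewrite Hf ?mulr1 // gl // lt_def nz g0.
Qed.

End Paths.
Section Probs.
Variables (R : realType) (S A : finType) (M : mdp R S A) (Bad : {set S}).
Implicit Types (sigma tau : strategy R S A) (t h pre l : seq (A * S)) (x : A * S).
Local Notation tpM := (tp M).
Local Notation pp sigma s0 t := (pathprob tpM sigma s0 t).
Local Notation Pn := (prob_safe_n M Bad).

Lemma sum_tuple0 (T : finType) (F : seq T -> R) :
  \sum_(t : 0.-tuple T) F t = F [::].
Proof.
rewrite (eq_bigr (fun _ => F [::])); last by move=> t _; rewrite tuple0.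
by rewrite sumr_const card_tuple expn0.
Qed.

Lemma Pn0 sigma s : Pn sigma s 0 = (s \notin Bad)%:R.
Proof. by rewrite /prob_safe_n (sum_tuple0 (fun t => pp sigma s t * (avoids Bad s t)%:R)) /pathprob /= mul1r /avoids andbT. Qed.

Lemma step_expand sigma s0 t (F : A -> S -> R) :
  \sum_(x : A * S) pp sigma s0 (rcons t x) * F x.1 x.2 =
  pp sigma s0 t * \sum_a (sigma s0 t a *
     \sum_s' (tpM (last_state s0 t) a s' * F a s')).
Proof.
rewrite (eq_bigr (fun x => pp sigma s0 (rcons t (x.1, x.2)) * F x.1 x.2)); last by case.
rewrite -(pair_bigA _ (fun a s' => pp sigma s0 (rcons t (a, s')) * F a s')) /= mulr_sumr; apply: eq_bigr => a _.
rewrite mulr_sumr mulr_sumr; apply: eq_bigr => s' _.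
by rewrite pathprob_rcons !mulrA.
Qed.

Lemma avoids_rcons s t x :
  avoids Bad s (rcons t x) = avoids Bad s t && avoids Bad (last_state s t) [:: x].
Proof. by rewrite -cats1 avoids_cat. Qed.

Lemma avoids1_ind s t x : avoids Bad s t ->
  avoids Bad (last_state s t) [:: x] = (x.2 \notin Bad).
Proof. by move=> /avoids_last; rewrite /avoids /= andbT => ->. Qed.

Lemma Pn_step sigma s0 n : is_strategy M sigma ->
  Pn sigma s0 n.+1 =
  \sum_(t : n.-tuple (A * S)) pp sigma s0 t * (avoids Bad s0 t)%:R *
     \sum_a (sigma s0 t a * \sum_s' (tpM (last_state s0 t) a s' * (s' \notin Bad)%:R)).
Proof.
move=> Hs; rewrite /prob_safe_n (@sum_tuple_rcons R _ n (fun t => pp sigma s0 t * (avoids Bad s0 t)%:R)); apply: eq_bigr => t _.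
rewrite (eq_bigr (fun x => pp sigma s0 (rcons t x) *
   (avoids Bad s0 t && avoids Bad (last_state s0 t) [:: (x.1, x.2)])%:R)); last first.
  by move=> [a s'] _; rewrite avoids_rcons.
rewrite (step_expand sigma s0 t (fun a s' => (avoids Bad s0 t && avoids Bad (last_state s0 t) [:: (a, s')])%:R)) -mulrA; case: (boolP (avoids Bad s0 t)) => av; last first.
  by rewrite mul0r mulr0 big1 ?mulr0 // => a _; rewrite big1 ?mulr0 // => s' _; rewrite mulr0.
rewrite mul1r; congr (_ * _); apply: eq_bigr => a _; congr (_ * _).
by apply: eq_bigr => s' _; rewrite /= (avoids1_ind (a, s') av).
Qed.

Lemma inner_le1 sigma s0 t (f : S -> R) : is_strategy M sigma -> valid_path M s0 t ->
  (forall s', 0 <= f s' <= 1) ->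
  0 <= \sum_a (sigma s0 t a * \sum_s' (tpM (last_state s0 t) a s' * f s')) <= 1.
Proof.
move=> Hs vt Hf; have [g0 [g1 gl]] := Hs s0 t vt.
apply/andP; split.
  apply: sumr_ge0 => a _; apply: mulr_ge0 => //; apply: sumr_ge0 => s' _.
  by apply: mulr_ge0; [exact: tp_ge0 | case/andP: (Hf s')].
rewrite -[leRHS](strat_mass Hs vt (f := fun a => \sum_s' tpM (last_state s0 t) a s')).
  apply: ler_sum => a _; apply: ler_wpM2l => //; apply: ler_sum => s' _.
  by apply: ler_piMr; [exact: tp_ge0 | case/andP: (Hf s')].
by move=> a la; rewrite tp_sum la.
Qed.

Lemma Pn_ge0 sigma s0 n : is_strategy M sigma -> 0 <= Pn sigma s0 n.
Proof.
move=> Hs; apply: sumr_ge0 => t _; apply: mulr_ge0 => //.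
by case: (pp_ge0_valid s0 t Hs).
Qed.

Lemma Pn_decr sigma s0 n : is_strategy M sigma -> Pn sigma s0 n.+1 <= Pn sigma s0 n.
Proof.
move=> Hs; rewrite Pn_step //; apply: ler_sum => t _.
have [p0 pv] := pp_ge0_valid s0 t Hs.
have [->|nz] := eqVneq (pp sigma s0 t) 0; first by rewrite !mul0r.
apply: ler_piMr; first by rewrite mulr_ge0.
have H : forall s', 0 <= ((s' \notin Bad)%:R : R) <= 1.
  by move=> s'; rewrite ler0n /= lern1 leq_b1.
by case/andP: (inner_le1 Hs (pv nz) H).
Qed.

Lemma Pn_nincr sigma s0 : is_strategy M sigma -> nonincreasing_seq (Pn sigma s0).
Proof. by move=> Hs; apply/nonincreasing_seqP => n; apply: Pn_decr. Qed.

Lemma ps_cvg sigma s0 : is_strategy M sigma -> cvgn (Pn sigma s0).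
Proof.
move=> Hs; apply: nonincreasing_is_cvgn; first exact: Pn_nincr.
by exists 0 => _ [n _ <-]; apply: Pn_ge0.
Qed.

Lemma ps_le sigma s0 n : is_strategy M sigma -> prob_safe M Bad sigma s0 <= Pn sigma s0 n.
Proof. by move=> Hs; apply: nonincreasing_cvgn_ge; [exact: Pn_nincr | exact: ps_cvg]. Qed.

Lemma ps_ge0 sigma s0 : is_strategy M sigma -> 0 <= prob_safe M Bad sigma s0.
Proof. by move=> Hs; apply: limr_ge; [exact: ps_cvg | apply: nearW => n; exact: Pn_ge0]. Qed.

Lemma ps_le1 sigma s0 : is_strategy M sigma -> prob_safe M Bad sigma s0 <= 1.
Proof. by move=> Hs; apply: (le_trans (ps_le s0 0 Hs)); rewrite Pn0 lern1 leq_b1. Qed.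

Lemma ps_bad sigma s0 : is_strategy M sigma -> s0 \in Bad -> prob_safe M Bad sigma s0 = 0.
Proof.
move=> Hs sb; apply/eqP; rewrite eq_le ps_ge0 // andbT.
by apply: (le_trans (ps_le s0 0 Hs)); rewrite Pn0 sb.
Qed.

Section ValFacts.
Variable sig0 : strategy R S A.
Hypothesis Hsig0 : is_strategy M sig0.

Lemma Val_has_sup s : has_sup [set prob_safe M Bad sigma s | sigma in is_strategy M].
Proof.
split; first by exists (prob_safe M Bad sig0 s), sig0.
by exists 1 => _ [sigma Hs <-]; apply: ps_le1.
Qed.

Lemma Val_ge sigma s : is_strategy M sigma -> prob_safe M Bad sigma s <= Val M Bad s.
Proof. by move=> Hs; apply: sup_upper_bound; [exact: Val_has_sup | exists sigma]. Qed.

Lemma Val_le1 s : Val M Bad s <= 1.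
Proof.
apply: ge_sup; first by exists (prob_safe M Bad sig0 s), sig0.
by move=> _ [sigma Hs <-]; apply: ps_le1.
Qed.

Lemma Val_ge0 s : 0 <= Val M Bad s.
Proof. by apply: le_trans (Val_ge s Hsig0); apply: ps_ge0. Qed.

Lemma Val_bad s : s \in Bad -> Val M Bad s = 0.
Proof.
move=> sb; apply/eqP; rewrite eq_le Val_ge0 andbT.
apply: ge_sup; first by exists (prob_safe M Bad sig0 s), sig0.
by move=> _ [sigma Hs <-]; rewrite ps_bad.
Qed.

Lemma Val_ind s : (s \notin Bad)%:R * Val M Bad s = Val M Bad s.
Proof. by case: (boolP (s \in Bad)) => sb /=; [rewrite mul0r Val_bad | rewrite mul1r]. Qed.

End ValFacts.
End Probs.
Section Bellman.
Variables (R : realType) (S A : finType) (M : mdp R S A) (Bad : {set S}).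
Implicit Types (sigma tau : strategy R S A) (t h pre l : seq (A * S)) (x : A * S).
Local Notation tpM := (tp M).
Local Notation pp sigma s0 t := (pathprob tpM sigma s0 t).
Local Notation Pn := (prob_safe_n M Bad).
Variable sig0 : strategy R S A.
Hypothesis Hsig0 : is_strategy M sig0.

Lemma sum_delta (a : A) (F : A -> R) : \sum_b (b == a)%:R * F b = F a.
Proof.
rewrite (bigD1 a) //= eqxx mul1r big1 ?addr0 // => b /negbTE ->.
by rewrite mul0r.
Qed.

Lemma bellman s a : s \notin Bad -> legal M s a ->
  \sum_s' tpM s a s' * Val M Bad s' <= Val M Bad s.
Proof.
move=> sB la; apply/ler_addgt0Pr => e e0.
have : forall s', exists sigma, is_strategy M sigma /\
    Val M Bad s' - e < prob_safe M Bad sigma s'.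
  move=> s'; have [_ [sigma Hs <-] Hlt] := sup_adherent e0 (Val_has_sup Bad Hsig0 s').
  by exists sigma.
case/choice => f Hf.
pose sc : strategy R S A := fun s1 h =>
  match h with
  | [::] => if s1 == s then (fun b => (b == a)%:R) else f s1 s1 [::]
  | (b, s2) :: h' => f s2 s2 h'
  end.
have Hc : is_strategy M sc.
  move=> s1 [|[b s2] h'] /= vh.
    case: eqP => [->|_]; last by have [H _] := Hf s1; exact: H.
    split; first by move=> b; rewrite ler0n.
    split; first by rewrite (eq_bigr (fun b => (b == a)%:R * 1)) ?sum_delta // => b _; rewrite mulr1.
    by move=> b; rewrite ltr0n lt0b => /eqP ->.
  case/and3P: vh => _ _ vh.
  by have [H _] := Hf s2; exact: H s2 h' vh.
have tp1 : \sum_s' tpM s a s' = 1 by rewrite tp_sum la.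
have key : forall k, Pn sc s k.+1 = \sum_s' tpM s a s' * Pn (f s') s' k.
  move=> k; rewrite /prob_safe_n.
  rewrite (@sum_tuple_cons R _ k (fun t => pp sc s t * (avoids Bad s t)%:R)).
  rewrite (eq_bigr (fun x => (x.1 == a)%:R * (tpM s x.1 x.2 * 
     \sum_(t : k.-tuple (A * S)) pp (f x.2) x.2 t * (avoids Bad x.2 t)%:R))); last first.
    move=> [b s2] _; rewrite !mulr_sumr; apply: eq_bigr => t _.
    rewrite /pathprob /= avoids_cons sB /= eqxx.
    have -> : cylprob tpM sc s [:: (b, s2)] s2 t = cylprob tpM (f s2) s2 [::] s2 t.
      by rewrite -(cats0 [:: (b, s2)]); apply: cyl_shift.
    by rewrite !mulrA.
  rewrite -(pair_bigA _ (fun b s2 => (b == a)%:R * (tpM s b s2 *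
     \sum_(t : k.-tuple (A * S)) pp (f s2) s2 t * (avoids Bad s2 t)%:R))) /=.
  rewrite (eq_bigr (fun b => (b == a)%:R * \sum_s2 (tpM s b s2 *
     \sum_(t : k.-tuple (A * S)) pp (f s2) s2 t * (avoids Bad s2 t)%:R))); last first.
    by move=> b _; rewrite mulr_sumr.
  by rewrite sum_delta.
have Hge : \sum_s' tpM s a s' * (Val M Bad s' - e) <= prob_safe M Bad sc s.
  apply: limr_ge; first exact: ps_cvg.
  apply: nearW => -[|k].
    rewrite Pn0 sB -tp1; apply: ler_sum => s' _; apply: ler_piMr; first exact: tp_ge0.
    by rewrite lerBlDr (le_trans (Val_le1 Bad Hsig0 _)) // lerDl ltW.
  rewrite key; apply: ler_sum => s' _; apply: ler_wpM2l; first exact: tp_ge0.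
  have [H1 H2] := Hf s'.
  exact: (le_trans (ltW H2) (ps_le Bad _ _ H1)).
have := le_trans Hge (Val_ge Bad Hsig0 _ Hc).
rewrite (eq_bigr (fun s' => tpM s a s' * Val M Bad s' - tpM s a s' * e)); last first.
  by move=> s' _; rewrite mulrBr.
by rewrite sumrB -mulr_suml tp1 mul1r lerBlDr.
Qed.

End Bellman.
Section GSec.
Variables (R : realType) (S A : finType) (M : mdp R S A) (Bad : {set S}).
Implicit Types (sigma tau : strategy R S A) (t h pre l : seq (A * S)) (x : A * S).
Local Notation tpM := (tp M).
Local Notation pp sigma s0 t := (pathprob tpM sigma s0 t).
Local Notation Pn := (prob_safe_n M Bad).
Local Notation V := (Val M Bad).
Variable sig0 : strategy R S A.
Hypothesis Hsig0 : is_strategy M sig0.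
Variable s0 : S.

Definition G sigma n := \sum_(t : n.-tuple (A * S))
  pp sigma s0 t * (avoids Bad s0 t)%:R * V (last_state s0 t).
Definition Bv s a := \sum_s' tpM s a s' * V s'.

Lemma G0 sigma : G sigma 0 = V s0.
Proof.
rewrite /G (sum_tuple0 (fun t => pp sigma s0 t * (avoids Bad s0 t)%:R * V (last_state s0 t))).
by rewrite /pathprob /= mul1r /avoids /= andbT (Val_ind Bad Hsig0).
Qed.

Lemma G_step sigma n : G sigma n.+1 = \sum_(t : n.-tuple (A * S))
  pp sigma s0 t * (avoids Bad s0 t)%:R * \sum_a (sigma s0 t a * Bv (last_state s0 t) a).
Proof.
rewrite /G (@sum_tuple_rcons R _ n (fun t => pp sigma s0 t * (avoids Bad s0 t)%:R * V (last_state s0 t))).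
apply: eq_bigr => t _.
rewrite (eq_bigr (fun x => pp sigma s0 (rcons t x) *
   ((avoids Bad s0 t && avoids Bad (last_state s0 t) [:: (x.1, x.2)])%:R * V x.2))); last first.
  by move=> [a s'] _; rewrite avoids_rcons last_state_rcons mulrA.
rewrite (@step_expand _ _ _ M sigma s0 t (fun a s' => (avoids Bad s0 t && avoids Bad (last_state s0 t) [:: (a, s')])%:R * V s')) -mulrA.
case: (boolP (avoids Bad s0 t)) => av; last first.
  by rewrite mul0r mulr0 big1 ?mulr0 // => a _; rewrite /Bv big1 ?mulr0 // => s' _; rewrite mul0r mulr0.
rewrite mul1r; congr (_ * _); apply: eq_bigr => a _; congr (_ * _).
apply: eq_bigr => s' _; rewrite /= (avoids1_ind (a, s') av) /=.
by rewrite (Val_ind Bad Hsig0).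
Qed.

Lemma sum_sigma_const sigma t (c : R) : is_strategy M sigma -> valid_path M s0 t ->
  \sum_a sigma s0 t a * c = c.
Proof.
move=> Hs vt; rewrite -mulr_suml.
by rewrite (eq_bigr (fun a => sigma s0 t a * 1)) ?(strat_mass Hs vt) ?mul1r // => a _; rewrite mulr1.
Qed.

Lemma G_term_ge0 sigma t : is_strategy M sigma ->
  0 <= pp sigma s0 t * (avoids Bad s0 t)%:R.
Proof. by move=> Hs; rewrite mulr_ge0 //; case: (pp_ge0_valid s0 t Hs). Qed.

Lemma G_decr sigma n : is_strategy M sigma -> G sigma n.+1 <= G sigma n.
Proof.
move=> Hs; rewrite G_step; apply: ler_sum => t _.
have [p0 pv] := pp_ge0_valid s0 t Hs.
have [->|nz] := eqVneq (pp sigma s0 t) 0; first by rewrite !mul0r.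
case: (boolP (avoids Bad s0 t)) => av; last by rewrite !mulr0 !mul0r.
apply: ler_wpM2l; first by rewrite mulr_ge0.
have vt := pv nz; have [g0 [_ gl]] := Hs s0 t vt.
rewrite -[leRHS](sum_sigma_const (V (last_state s0 t)) Hs vt).
apply: ler_sum => a _.
have [->|na] := eqVneq (sigma s0 t a) 0; first by rewrite !mul0r.
apply: ler_wpM2l => //; apply: (bellman Hsig0) => //; first exact: avoids_last.
by apply: gl; rewrite lt_def na g0.
Qed.

Lemma G_pruned sigma n : is_pruned_strategy M Bad sigma -> G sigma n = V s0.
Proof.
move=> [Hs Hopt]; elim: n => [|n IH]; first exact: G0.
rewrite -IH G_step; apply: eq_bigr => t _.
have [p0 pv] := pp_ge0_valid s0 t Hs.
have [->|nz] := eqVneq (pp sigma s0 t) 0; first by rewrite !mul0r.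
congr (_ * _); have vt := pv nz; have [g0 _] := Hs s0 t vt.
rewrite -[RHS](sum_sigma_const (V (last_state s0 t)) Hs vt).
apply: eq_bigr => a _.
have [->|na] := eqVneq (sigma s0 t a) 0; first by rewrite !mul0r.
have [_ E] : Opt M Bad (last_state s0 t) a by apply: (Hopt s0 t vt a); rewrite lt_def na g0.
by rewrite /Bv -E.
Qed.

Lemma G_le_Pn sigma n : is_strategy M sigma -> G sigma n <= Pn sigma s0 n.
Proof.
move=> Hs; apply: ler_sum => t _; apply: ler_piMr; first exact: G_term_ge0.
exact: (Val_le1 Bad Hsig0).
Qed.

Lemma part1 sigma : is_pruned_strategy M Bad sigma -> prob_safe M Bad sigma s0 = V s0.
Proof.
move=> Hp; have Hs := Hp.1; apply/eqP; rewrite eq_le (Val_ge Bad Hsig0) //=.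
apply: limr_ge; first exact: ps_cvg.
by apply: nearW => n; rewrite -(G_pruned n Hp); apply: G_le_Pn.
Qed.

End GSec.
Lemma cvg_sum_fin (R : realType) (I : finType) (f : I -> nat -> R) (l : I -> R) :
  (forall i, f i @ \oo --> l i) ->
  (fun m => \sum_i f i m) @ \oo --> \sum_i l i.
Proof.
move=> H; apply: cvg_big => //; first exact: add_continuous.
Qed.

Section OptSec.
Variables (R : realType) (S A : finType) (M : mdp R S A) (Bad : {set S}).
Implicit Types (tau : strategy R S A) (t h pre l : seq (A * S)) (x : A * S).
Local Notation tpM := (tp M).
Local Notation pp sigma s0 t := (pathprob tpM sigma s0 t).
Local Notation Pn := (prob_safe_n M Bad).
Local Notation V := (Val M Bad).
Variable sig0 : strategy R S A.
Hypothesis Hsig0 : is_strategy M sig0.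
Variable s0 : S.
Variable sigma : strategy R S A.
Hypothesis Hs : is_strategy M sigma.

Definition tau t : strategy R S A := fun s h =>
  if s == last_state s0 t then sigma s0 (t ++ h) else sigma s h.

Lemma tau_strat t : valid_path M s0 t -> is_strategy M (tau t).
Proof.
move=> vt s h vh; rewrite /tau; case: eqP => [E|_]; last exact: Hs.
subst s; have v2 : valid_path M s0 (t ++ h) by rewrite valid_cat vt.
by have := @Hs s0 (t ++ h) v2; rewrite last_state_cat.
Qed.

Definition Q t := prob_safe M Bad (tau t) (last_state s0 t).

Lemma decomp n m (g : seq (A * S) -> R) :
  \sum_(t : (n + m).-tuple (A * S)) pp sigma s0 t * g (take n t) * (avoids Bad s0 t)%:R =
  \sum_(t1 : n.-tuple (A * S)) pp sigma s0 t1 * g t1 * (avoids Bad s0 t1)%:R *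
     Pn (tau t1) (last_state s0 t1) m.
Proof.
rewrite (@sum_tuple_cat R _ n m (fun t => pp sigma s0 t * g (take n t) * (avoids Bad s0 t)%:R)).
apply: eq_bigr => t1 _; rewrite /prob_safe_n mulr_sumr; apply: eq_bigr => t2 _.
have Hc : forall h, sigma s0 (t1 ++ h) = tau t1 (last_state s0 t1) h.
  by move=> h; rewrite /tau eqxx.
have H := @cyl_shift R S A tpM sigma (tau t1) s0 (last_state s0 t1) t1 [::]
   (last_state s0 t1) t2 Hc.
rewrite cats0 in H.
rewrite take_size_cat ?size_tuple // pathprob_cat H avoids_cat.
case: (avoids Bad s0 t1); last by rewrite /= !mulr0 mul0r.
by rewrite /= /pathprob !mulr1 !mulrA; congr (_ * _); rewrite -!mulrA; congr (_ * _); rewrite mulrC.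
Qed.

Lemma decomp_lim n (g : seq (A * S) -> R) :
  (fun m => \sum_(t : (n + m).-tuple (A * S)) pp sigma s0 t * g (take n t) * (avoids Bad s0 t)%:R)
  @ \oo --> \sum_(t1 : n.-tuple (A * S)) pp sigma s0 t1 * g t1 * (avoids Bad s0 t1)%:R * Q t1.
Proof.
rewrite (_ : (fun m => _) = (fun m => \sum_(t1 : n.-tuple (A * S)) pp sigma s0 t1 * g t1 *
   (avoids Bad s0 t1)%:R * Pn (tau t1) (last_state s0 t1) m)); last first.
  by apply: funext => m; rewrite decomp.
apply: cvg_sum_fin => t1.
have [p0 pv] := pp_ge0_valid s0 t1 Hs.
have [E|nz] := eqVneq (pp sigma s0 t1) 0.
  rewrite E !mul0r; under eq_cvg do rewrite !mul0r. exact: cvg_cst.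
apply: cvgMl_tmp; exact: ps_cvg (tau_strat (pv nz)).
Qed.

Lemma ps_decomp n : prob_safe M Bad sigma s0 =
  \sum_(t1 : n.-tuple (A * S)) pp sigma s0 t1 * 1 * (avoids Bad s0 t1)%:R * Q t1.
Proof.
have H1 := decomp_lim (n:=n) (g:=fun _ => 1).
have H2 : (fun m => \sum_(t : (n + m).-tuple (A * S)) pp sigma s0 t * 1 * (avoids Bad s0 t)%:R)
   @ \oo --> prob_safe M Bad sigma s0.
  rewrite (_ : (fun m => _) = [sequence Pn sigma s0 (m + n)]_m).
    by rewrite cvg_shiftn; exact: ps_cvg.
  by apply: funext => m /=; rewrite /prob_safe_n addnC; apply: eq_bigr => t _; rewrite mulr1.
exact: (cvg_unique _ H2 H1).
Qed.

Hypothesis Hopt : prob_safe M Bad sigma s0 = V s0.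

Lemma G_le_V n : G M Bad s0 sigma n <= V s0.
Proof.
elim: n => [|n IH]; first by rewrite (G0 Bad Hsig0).
exact: le_trans (G_decr Bad Hsig0 s0 n Hs) IH.
Qed.

Lemma GeqV n : G M Bad s0 sigma n = V s0.
Proof.
apply/eqP; rewrite eq_le G_le_V /= -{1}Hopt (ps_decomp n).
apply: ler_sum => t _; rewrite mulr1.
have [p0 pv] := pp_ge0_valid s0 t Hs.
have [->|nz] := eqVneq (pp sigma s0 t) 0; first by rewrite !mul0r.
apply: ler_wpM2l; first exact: (G_term_ge0 Bad s0 _ Hs).
exact: (Val_ge Bad Hsig0 _ (tau_strat (pv nz))).
Qed.

Lemma Q_eq t : pp sigma s0 t != 0 -> avoids Bad s0 t -> Q t = V (last_state s0 t).
Proof.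
move=> nz av; pose n := size t; pose tt : n.-tuple (A * S) := in_tuple t.
have vt : valid_path M s0 t by case: (pp_ge0_valid s0 t Hs) => _; apply.
have H : \sum_(t' : n.-tuple (A * S)) pp sigma s0 t' * (avoids Bad s0 t')%:R *
    (V (last_state s0 t') - Q t') = 0.
  rewrite (eq_bigr (fun t' : n.-tuple (A * S) => pp sigma s0 t' * (avoids Bad s0 t')%:R * V (last_state s0 t') -
     pp sigma s0 t' * 1 * (avoids Bad s0 t')%:R * Q t')); last first.
    by move=> t' _; rewrite mulr1 mulrBr.
  by rewrite sumrB -ps_decomp Hopt -/(G M Bad s0 sigma n) GeqV subrr.
have Hnn : forall t' : n.-tuple (A * S), true ->
    0 <= pp sigma s0 t' * (avoids Bad s0 t')%:R * (V (last_state s0 t') - Q t').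
  move=> t' _; have [p0 pv] := pp_ge0_valid s0 t' Hs.
  have [->|nz'] := eqVneq (pp sigma s0 t') 0; first by rewrite !mul0r.
  apply: mulr_ge0; first exact: (G_term_ge0 Bad s0 _ Hs).
  by rewrite subr_ge0; exact: (Val_ge Bad Hsig0 _ (tau_strat (pv nz'))).
have := @psumr_eq0P _ _ _ _ Hnn H tt isT; rewrite /= => /eqP.
rewrite !mulf_eq0 (negbTE nz) av /= oner_eq0 /= subr_eq0 => /eqP.
by move=> ->.
Qed.


Lemma inner_bell t : valid_path M s0 t -> avoids Bad s0 t ->
  forall a, 0 <= sigma s0 t a * (V (last_state s0 t) - Bv M Bad (last_state s0 t) a).
Proof.
move=> vt av a; have [g0 [_ gl]] := @Hs s0 t vt.
have [->|na] := eqVneq (sigma s0 t a) 0; first by rewrite mul0r.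
apply: mulr_ge0 => //; rewrite subr_ge0; apply: (bellman Hsig0); first exact: avoids_last.
by apply: gl; rewrite lt_def na g0.
Qed.

Lemma opt_on t a : pp sigma s0 t != 0 -> avoids Bad s0 t -> 0 < sigma s0 t a ->
  Opt M Bad (last_state s0 t) a.
Proof.
move=> nz av sa; pose n := size t; pose tt : n.-tuple (A * S) := in_tuple t.
have vt : valid_path M s0 t by case: (pp_ge0_valid s0 t Hs) => _; apply.
have [g0 [_ gl]] := @Hs s0 t vt.
pose T t' := V (last_state s0 t') - \sum_a (sigma s0 t' a * Bv M Bad (last_state s0 t') a).
have H : \sum_(t' : n.-tuple (A * S)) pp sigma s0 t' * (avoids Bad s0 t')%:R * T t' = 0.
  rewrite (eq_bigr (fun t' : n.-tuple (A * S) => pp sigma s0 t' * (avoids Bad s0 t')%:R * V (last_state s0 t') -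
     pp sigma s0 t' * (avoids Bad s0 t')%:R * \sum_a (sigma s0 t' a * Bv M Bad (last_state s0 t') a))); last first.
    by move=> t' _; rewrite mulrBr.
  rewrite sumrB -(G_step Bad Hsig0) -/(G M Bad s0 sigma n) !GeqV.
  by rewrite subrr.
have Hnn : forall t' : n.-tuple (A * S), true ->
    0 <= pp sigma s0 t' * (avoids Bad s0 t')%:R * T t'.
  move=> t' _; have [p0 pv] := pp_ge0_valid s0 t' Hs.
  have [->|nz'] := eqVneq (pp sigma s0 t') 0; first by rewrite !mul0r.
  case: (boolP (avoids Bad s0 t')) => av'; last by rewrite mulr0 mul0r.
  apply: mulr_ge0; first by rewrite mulr1.
  rewrite /T -[X in 0 <= X - _](sum_sigma_const (V (last_state s0 t')) Hs (pv nz')).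
  rewrite -sumrB; apply: sumr_ge0 => b _; rewrite -mulrBr.
  exact: inner_bell (pv nz') av' b.
have := @psumr_eq0P _ _ _ _ Hnn H tt isT; rewrite /= => /eqP.
rewrite !mulf_eq0 (negbTE nz) av /= oner_eq0 /= => /eqP HT.
have H2 : \sum_a' sigma s0 t a' * (V (last_state s0 t) - Bv M Bad (last_state s0 t) a') = 0.
  rewrite (eq_bigr (fun a' => sigma s0 t a' * V (last_state s0 t) -
      sigma s0 t a' * Bv M Bad (last_state s0 t) a')); last by move=> a' _; rewrite mulrBr.
  by rewrite sumrB (sum_sigma_const _ Hs vt).
have Hnn2 : forall a', true -> 0 <= sigma s0 t a' * (V (last_state s0 t) - Bv M Bad (last_state s0 t) a').
  by move=> a' _; exact: inner_bell.
have := @psumr_eq0P _ _ _ _ Hnn2 H2 a isT => /eqP.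
rewrite mulf_eq0 (gt_eqF sa) /= subr_eq0 => /eqP E.
by split; [exact: gl | exact: E].
Qed.

Lemma ers_eq n : exp_reward_safe M Bad sigma s0 n =
  \sum_(t : n.-tuple (A * S)) pp sigma s0 t * reward_along (rew M) s0 t *
     (avoids Bad s0 t)%:R * V (last_state s0 t).
Proof.
rewrite /exp_reward_safe (cvg_lim _ (decomp_lim (n:=n) (g:=reward_along (rew M) s0))) //.
apply: eq_bigr => t _.
have [->|nz] := eqVneq (pp sigma s0 t) 0; first by rewrite !mul0r.
case: (boolP (avoids Bad s0 t)) => av; last by rewrite !mulr0 !mul0r.
by rewrite (Q_eq nz av).
Qed.

End OptSec.
Section Final.
Variables (R : realType) (S A : finType) (M : mdp R S A) (Bad : {set S}).
Implicit Types (sigma tau : strategy R S A) (t h pre l : seq (A * S)) (x : A * S).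
Local Notation tpM := (tp M).
Local Notation pp sigma s0 t := (pathprob tpM sigma s0 t).
Local Notation V := (Val M Bad).
Variable sig0 : strategy R S A.
Hypothesis Hsig0 : is_strategy M sig0.
Variable s0 : S.
Hypothesis V0 : 0 < V s0.

Lemma ptp_eq s a s' : Opt M Bad s a ->
  pruned_tp M Bad s a s' * V s = tpM s a s' * V s'.
Proof.
move=> Ho; rewrite /pruned_tp; case: asboolP => [[vp _]|nh].
  by rewrite divfK // gt_eqF.
have Vs0 : V s = 0.
  apply/eqP; rewrite eq_le (Val_ge0 Bad Hsig0) andbT leNgt; apply/negP => vp.
  by apply: nh.
rewrite Vs0 mulr0; case: Ho => _ E. idtac.
have Hnn : forall s1, true -> 0 <= tpM s a s1 * V s1.
  by move=> s1 _; rewrite mulr_ge0 ?tp_ge0 ?(Val_ge0 Bad Hsig0).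
by rewrite (@psumr_eq0P _ _ _ _ Hnn (esym (etrans (esym Vs0) E)) s' isT).
Qed.

Lemma telescope sigma : is_pruned_strategy M Bad sigma -> forall t,
  pathprob (pruned_tp M Bad) sigma s0 t * V s0 =
  pp sigma s0 t * (avoids Bad s0 t)%:R * V (last_state s0 t).
Proof.
move=> [Hs Hp]; elim/last_ind => [|t [a s'] IH].
  by rewrite /pathprob /= !mul1r /avoids /= andbT (Val_ind Bad Hsig0).
rewrite !pathprob_rcons last_state_rcons avoids_rcons.
rewrite mulrAC IH.
have [p0 pv] := pp_ge0_valid s0 t Hs.
have [->|nz] := eqVneq (pp sigma s0 t) 0; first by rewrite !(mul0r, mulr0).
case: (boolP (avoids Bad s0 t)) => av; last by rewrite /= !mulr0 ?mul0r.
rewrite (avoids1_ind (a, s') av) /= mulr1 -(mulrA _ (s' \notin Bad)%:R (V s')) (Val_ind Bad Hsig0).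
have vt := pv nz; have [g0 _] := Hs s0 t vt.
have [->|na] := eqVneq (sigma s0 t a) 0; first by rewrite !(mul0r, mulr0).
have Ho : Opt M Bad (last_state s0 t) a by apply: (Hp s0 t vt a); rewrite lt_def na g0.
rewrite -!mulrA; congr (_ * _); rewrite mulrCA; congr (_ * _).
by rewrite mulrC ptp_eq.
Qed.

Lemma agree sigma sigma' :
  (forall h, pp sigma s0 h != 0 -> avoids Bad s0 h -> sigma' s0 h = sigma s0 h) ->
  forall t, pp sigma s0 t * (avoids Bad s0 t)%:R = pp sigma' s0 t * (avoids Bad s0 t)%:R.
Proof.
move=> Hag; elim/last_ind => [|t [a s'] IH] //.
rewrite !pathprob_rcons avoids_rcons.
case: (boolP (avoids Bad s0 t)) => av; last by rewrite /= !mulr0.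
have {}IH : pp sigma s0 t = pp sigma' s0 t.
  by move: IH; rewrite av /= !mulr1n !mulr1.
rewrite /=.
have [E|nz] := eqVneq (pp sigma s0 t) 0.
  by rewrite E -IH E !mul0r.
by rewrite Hag // IH.
Qed.

Lemma cond_eq sigma sigma2 : is_strategy M sigma -> prob_safe M Bad sigma s0 = V s0 ->
  is_pruned_strategy M Bad sigma2 ->
  (forall t, pp sigma s0 t * (avoids Bad s0 t)%:R = pp sigma2 s0 t * (avoids Bad s0 t)%:R) ->
  cond_MP M Bad sigma s0 = pruned_exp_MP M Bad sigma2 s0.
Proof.
move=> Hs Hopt Hp2 Hag.
rewrite /cond_MP /pruned_exp_MP /exp_MP; congr limn_inf; apply: funext => n.
rewrite (ers_eq Hsig0 Hs Hopt) Hopt -mulrA; congr (_ * _).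
rewrite /exp_reward mulr_suml; apply: eq_bigr => t _.
have -> : pathprob (pruned_tp M Bad) sigma2 s0 t =
    pathprob (pruned_tp M Bad) sigma2 s0 t * V s0 / V s0 by rewrite mulfK // gt_eqF.
rewrite telescope // -Hag.
by rewrite -!mulrA; congr (_ * _); rewrite mulrC -!mulrA; congr (_ * _); rewrite mulrC -mulrA.
Qed.

End Final.

Theorem theorem3 (R : realType) (S A : finType) (M : mdp R S A)
    (Bad : {set S}) (s0 : S) (sigma_star : strategy R S A) :
  sinks M Bad ->
  0 < Val M Bad s0 ->
  is_pruned_strategy M Bad sigma_star ->
  (forall sigma, is_pruned_strategy M Bad sigma ->
     pruned_exp_MP M Bad sigma s0 <= pruned_exp_MP M Bad sigma_star s0) ->
  prob_safe M Bad sigma_star s0 = Val M Bad s0 /\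
  (forall sigma, opt_safe_strategies M Bad s0 sigma ->
     cond_MP M Bad sigma s0 <= cond_MP M Bad sigma_star s0).
Proof.
move=> _ Hpos Hpr Hmax; have Hss := Hpr.1.
have P1 := part1 Hss s0 Hpr.
split => // sigma [Hs Hopt].
pose sigma' : strategy R S A := fun s h =>
  if (s == s0) && ((pathprob (tp M) sigma s0 h != 0) && avoids Bad s0 h)
  then sigma s0 h else sigma_star s h.
have Hpr' : is_pruned_strategy M Bad sigma'.
  split.
    move=> s h vh; rewrite /sigma'; case: ifP => [/andP[/eqP E _]|_].
      by subst s; exact: Hs.
    exact: Hss.
  move=> s h vh a; rewrite /sigma'; case: ifP => [/andP[/eqP E /andP[nz av]]|_].
    by subst s; exact: (opt_on Hss Hs Hopt nz av).
  exact: Hpr.2.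
have Hag : forall t, pathprob (tp M) sigma s0 t * (avoids Bad s0 t)%:R =
    pathprob (tp M) sigma' s0 t * (avoids Bad s0 t)%:R.
  by apply: agree => h nz av; rewrite /sigma' eqxx nz av.
rewrite (cond_eq Hss Hpos Hs Hopt Hpr' Hag).
rewrite (cond_eq Hss Hpos Hss P1 Hpr (fun t => erefl)).
exact: Hmax.
Qed.
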